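(* Let $V=V_{\bar0}\oplus V_{\bar1}$ be an $\mathcal{L}$-module which is free of rank $2$ as a $\mathbb{C}[L_{0,0}]$-module, with homogeneous basis elements $1_{\bar0}\in V_{\bar0}$ and $1_{\bar1}\in V_{\bar1}$, so $V_{\bar0}=\mathbb{C}[L_{0,0}]1_{\bar0}$ and $V_{\bar1}=\mathbb{C}[L_{0,0}]1_{\bar1}$. Write $f(t)1_{\bar0}:=f(L_{0,0})1_{\bar0}$ and $g(x)1_{\bar1}:=g(L_{0,0})1_{\bar1}$ for polynomials $f,g$. Suppose $\lambda,\mu\in\mathbb{C}^*$ and $a,b,c,d\in\mathbb{C}$ are such that for all $f\in\mathbb{C}[t]$, $g\in\mathbb{C}[x]$, $m\in\mathbb{Z}$, $i\in\mathbb{Z}_+$: $L_{m,i}f(t)1_{\bar0}=\lambda^m(\delta_{i,0}(t-mqa)+\delta_{q,-1}\delta_{i,1}b)f(t-mq)1_{\bar0}$ and $L_{m,i}g(x)1_{\bar1}=\mu^m(\delta_{i,0}(x-mqc)+\delta_{q,-1}\delta_{i,1}d)g(x-mq)1_{\bar1}$. Then $\lambda=\mu$, $\delta_{q,-1}b=\delta_{q,-1}d$, and there exists $e\in\mathbb{C}^*$ such that one of the following holds: (i) $c=a+\frac12$, $G_{\frac12,0}1_{\bar0}=e1_{\bar1}$, $G_{\frac12,1}1_{\bar0}=0$, $G_{\frac12,1}1_{\bar1}=\frac{2q}{e}\lambda\delta_{q,-1}b1_{\bar0}$, $G_{\frac12,0}1_{\bar1}=\frac{q}{e}\lambda(t-qa)1_{\bar0}$;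 (ii) $c=a-\frac12$, $G_{\frac12,0}1_{\bar1}=e1_{\bar0}$, $G_{\frac12,1}1_{\bar1}=0$, $G_{\frac12,1}1_{\bar0}=\frac{2q}{e}\lambda\delta_{q,-1}b1_{\bar1}$, $G_{\frac12,0}1_{\bar0}=\frac{q}{e}\lambda(x-qa+\frac{q}{2})1_{\bar1}$.
   Context: Fix $q\in\mathbb{C}^*$; $\mathbb{Z}_+=\{0,1,2,\dots\}$; $\delta$ is the Kronecker delta. The Neveu-Schwarz-Block algebra $\mathcal{L}$ is the Lie superalgebra over $\mathbb{C}$ with even basis $\{L_{m,i}\mid m\in\mathbb{Z},i\in\mathbb{Z}_+\}$, odd basis $\{G_{l,j}\mid l\in\frac12+\mathbb{Z},j\in\mathbb{Z}_+\}$ and brackets $[L_{m,i},L_{n,j}]=(n(i+q)-m(j+q))L_{m+n,i+j}$, $[L_{m,i},G_{l,j}]=(l(i+q)-m(j+\frac{q}{2}))G_{m+l,i+j}$, $[G_{l,i},G_{r,j}]=2qL_{l+r,i+j}$. Modules are supermodules. Thus $L_{0,0}$ acts on $V_{\bar0}\cong\mathbb{C}[t]$ as multiplication by $t$ and on $V_{\bar1}\cong\mathbb{C}[x]$ as multiplication by $x$. *)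

(* Defs.v *)
From HB Require Import structures.
From mathcomp Require Import all_boot all_order all_algebra.
From mathcomp Require Import reals Rstruct complex.
Set Implicit Arguments. Unset Strict Implicit. Unset Printing Implicit Defensive.
Import Order.TTheory GRing.Theory Num.Theory.
Local Open Scope ring_scope.

Notation CC := (Rdefinitions.R)[i].

(* The underlying space of a rank-2 free C[L_{0,0}]-module with homogeneous
   basis 1_0, 1_1:  V = C[t] 1_0 (+) C[x] 1_1 is represented by pairs
   (f, g) of polynomials, meaning f(t) 1_0 + g(x) 1_1.  The even part is
   {(f,0)}, the odd part {(0,g)}. *)
Definition V : Type := ({poly CC} * {poly CC})%type.

Definition one0 : V := (1, 0).
Definition one1 : V := (0, 1).

Definition is_linear_op (T : V -> V) : Prop :=
  forall (k : CC) (u v : V), T (k *: u + v) = k *: T u + T v.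

Definition is_even_op (T : V -> V) : Prop :=
  (forall f : {poly CC}, (T (f, 0)).2 = 0) /\
  (forall g : {poly CC}, (T (0, g)).1 = 0).
Definition is_odd_op (T : V -> V) : Prop :=
  (forall f : {poly CC}, (T (f, 0)).1 = 0) /\
  (forall g : {poly CC}, (T (0, g)).2 = 0).

(* Lop m i   represents the action of L_{m,i}   (m : int, i : nat),
   Gop k j   represents the action of G_{k+1/2, j} (k : int, j : nat),
   so that the half-integer index l = k + 1/2 ranges over 1/2 + Z. *)
Definition NSB_module (q : CC) (Lop : int -> nat -> V -> V)
    (Gop : int -> nat -> V -> V) : Prop :=
  (forall m i, is_linear_op (Lop m i)) /\
  (forall k j, is_linear_op (Gop k j)) /\
  (forall m i, is_even_op (Lop m i)) /\
  (forall k j, is_odd_op (Gop k j)) /\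
  (forall (m n : int) (i j : nat) (v : V),
     Lop m i (Lop n j v) - Lop n j (Lop m i v)
     = (n%:~R * (i%:R + q) - m%:~R * (j%:R + q)) *: Lop (m + n) (i + j)%N v) /\
  (forall (m k : int) (i j : nat) (v : V),
     Lop m i (Gop k j v) - Gop k j (Lop m i v)
     = ((k%:~R + 2^-1) * (i%:R + q) - m%:~R * (j%:R + q / 2))
         *: Gop (m + k) (i + j)%N v) /\
  (forall (k k' : int) (i j : nat) (v : V),
     Gop k i (Gop k' j v) + Gop k' j (Gop k i v)
     = (2 * q) *: Lop (k + k' + 1) (i + j)%N v).

Definition kdelta {T : eqType} (x y : T) : CC := (x == y)%:R.

(* Main.v *)
Require Import Defs.
From HB Require Import structures.
From mathcomp Require Import all_boot all_order all_algebra.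
From mathcomp Require Import reals Rstruct complex.
From mathcomp Require Import ring zify.
Import Order.TTheory GRing.Theory Num.Theory.
Local Open Scope ring_scope.

Lemma pairD (a b c d : {poly CC}) : ((a, b) : V) + (c, d) = (a + c, b + d).
Proof. by []. Qed.
Lemma pairB (a b c d : {poly CC}) : ((a, b) : V) - (c, d) = (a - c, b - d).
Proof. by []. Qed.
Lemma pairZ (k : CC) (a b : {poly CC}) : k *: ((a, b) : V) = (k *: a, k *: b).
Proof. by []. Qed.

Lemma lin0 (T : V -> V) : is_linear_op T -> T 0 = 0.
Proof.
move=> hT; have := hT 1 0 0; rewrite !scale1r addr0.
by move=> h; apply: (addrI (T 0)); rewrite addr0 -h.
Qed.

Lemma linD (T : V -> V) : is_linear_op T -> forall u v, T (u + v) = T u + T v.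
Proof. by move=> hT u v; have := hT 1 u v; rewrite !scale1r. Qed.

Lemma linZ (T : V -> V) : is_linear_op T -> forall k u, T (k *: u) = k *: T u.
Proof. by move=> hT k u; have := hT k u 0; rewrite !addr0 lin0 // addr0. Qed.

Lemma oddE1 (T : V -> V) : is_odd_op T -> forall f, T (f, 0) = (0, (T (f,0)).2).
Proof. by move=> [h1 _] f; move: (h1 f); case: (T (f,0)) => x y /= ->. Qed.

Lemma oddE2 (T : V -> V) : is_odd_op T -> forall g, T (0, g) = ((T (0,g)).1, 0).
Proof. by move=> [_ h2] g; move: (h2 g); case: (T (0,g)) => x y /= ->. Qed.

Lemma shift_lemma (G L : V -> V) (s : CC) :
  is_linear_op G -> is_odd_op G ->
  (forall f g, L (f, g) = ('X * f, 'X * g)) ->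
  (forall v, L (G v) - G (L v) = s *: G v) ->
  (forall f, G (f, 0) = (0, (f \Po ('X - s%:P)) * (G (1,0)).2)) /\
  (forall g, G (0, g) = ((g \Po ('X - s%:P)) * (G (0,1)).1, 0)).
Proof.
move=> Gl Go hL hc.
have hc' : forall v, G (L v) = L (G v) - s *: G v.
  by move=> v; rewrite -hc opprB addrC subrK.
split.
- elim/poly_ind => [|p c IH].
    by rewrite comp_poly0 mul0r; exact (lin0 G Gl).
  have -> : ((p * 'X + c%:P, 0) : V) = c *: (1, 0) + L (p, 0).
    rewrite hL; rewrite pairZ pairD.
    by congr pair; rewrite ?scaler0 ?mulr0 ?addr0 // -mul_polyC mulr1 addrC mulrC.
  rewrite (linD _ Gl) (linZ _ Gl) hc' IH hL (oddE1 _ Go 1) !pairZ !pairB !pairD /=.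
  congr pair; first by rewrite !(mulr0, scaler0, subrr, addr0).
  rewrite comp_polyD comp_polyM comp_polyX comp_polyC -!mul_polyC; ring.
- elim/poly_ind => [|p c IH].
    by rewrite comp_poly0 mul0r; exact (lin0 G Gl).
  have -> : ((0, p * 'X + c%:P) : V) = c *: (0, 1) + L (0, p).
    rewrite hL; rewrite pairZ pairD.
    by congr pair; rewrite ?scaler0 ?mulr0 ?addr0 // -mul_polyC mulr1 addrC mulrC.
  rewrite (linD _ Gl) (linZ _ Gl) hc' IH hL (oddE2 _ Go 1) !pairZ !pairB !pairD /=.
  congr pair; last by rewrite !(mulr0, scaler0, subrr, addr0).
  rewrite comp_polyD comp_polyM comp_polyX comp_polyC -!mul_polyC; ring.
Qed.

Lemma lin_eq (A B C D : CC) :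
  A%:P * ('X - B%:P) = C%:P * ('X - D%:P) -> A = C /\ A * B = C * D.
Proof.
move=> H.
have h1 := congr1 (fun p : {poly CC} => p`_1) H.
have h0 := congr1 (fun p : {poly CC} => p`_0) H.
rewrite /= !coefCM !coefB !coefX !coefC /= in h1 h0.
rewrite !subr0 !mulr1 in h1; split => //.
by move: h0; rewrite !sub0r !mulrN => /oppr_inj.
Qed.

Lemma comp_polyNC (c : CC) (p : {poly CC}) : (- c%:P) \Po p = - c%:P.
Proof. by rewrite -polyCN comp_polyC. Qed.
Lemma comp_polyN' (r p : {poly CC}) : (- r) \Po p = - (r \Po p).
Proof. by apply/eqP; rewrite -addr_eq0 -comp_polyD addNr comp_poly0. Qed.

Ltac csimp := rewrite ?(comp_polyD, comp_polyB, comp_polyM, comp_polyZ, comp_polyX, comp_polyC, comp_polyXr, comp_polyNC, comp_polyN').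
Theorem lemma5p1 (q : CC) (hq : q != 0)
  (Lop : int -> nat -> V -> V) (Gop : int -> nat -> V -> V)
  (hmod : NSB_module q Lop Gop)
  (lambda mu a b c d : CC) (hlambda : lambda != 0) (hmu : mu != 0)
  (hL0 : forall (f : {poly CC}) (m : int) (i : nat),
     Lop m i (f, 0) =
       (lambda ^ m *: ((kdelta i 0%N) *: ('X - (m%:~R * q * a)%:P)
                        + (kdelta q (-1) * kdelta i 1%N * b)%:P)
          * (f \Po ('X - (m%:~R * q)%:P)), 0))
  (hL1 : forall (g : {poly CC}) (m : int) (i : nat),
     Lop m i (0, g) =
       (0, mu ^ m *: ((kdelta i 0%N) *: ('X - (m%:~R * q * c)%:P)
                        + (kdelta q (-1) * kdelta i 1%N * d)%:P)
          * (g \Po ('X - (m%:~R * q)%:P)))) :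
  lambda = mu /\ kdelta q (-1) * b = kdelta q (-1) * d /\
  exists e : CC, e != 0 /\
   ((c = a + 2^-1 /\
     Gop 0 0%N one0 = e *: one1 /\
     Gop 0 1%N one0 = 0 /\
     Gop 0 1%N one1 = (2 * q / e * lambda * kdelta q (-1) * b) *: one0 /\
     Gop 0 0%N one1 = ((q / e * lambda) *: ('X - (q * a)%:P), 0))
    \/
    (c = a - 2^-1 /\
     Gop 0 0%N one1 = e *: one0 /\
     Gop 0 1%N one1 = 0 /\
     Gop 0 1%N one0 = (2 * q / e * lambda * kdelta q (-1) * b) *: one1 /\
     Gop 0 0%N one0 = (0, (q / e * lambda) *: ('X - (q * a - q / 2)%:P)))).
Proof.
case: hmod => Llin [Glin [Lev [God [LL [LG GG]]]]].
set δ := kdelta q (-1) in hL0 hL1 *.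
have hL00 : forall f g, Lop 0 0%N (f,g) = ('X * f, 'X * g).
  move=> f g; have -> : ((f,g):V) = (f,0) + (0,g) by rewrite pairD addr0 add0r.
  rewrite (linD _ (Llin 0 0%N)) hL0 hL1 pairD /kdelta /= mulr0z !mul0r !mulr0 subr0 comp_polyXr expr0z !scale1r !addr0 add0r.
  by rewrite !mul0r !addr0 !comp_polyXr.
set s := q / 2.
have LG00 : forall v, Lop 0 0%N (Gop 0 0%N v) - Gop 0 0%N (Lop 0 0%N v) = s *: Gop 0 0%N v.
  move=> v; rewrite LG addr0 add0n; congr (_ *: _); rewrite /s; ring.
have LG01 : forall v, Lop 0 0%N (Gop 0 1%N v) - Gop 0 1%N (Lop 0 0%N v) = s *: Gop 0 1%N v.
  move=> v; rewrite LG addr0 add0n; congr (_ *: _); rewrite /s; ring.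
have [sh0f sh0g] := shift_lemma _ _ _ (Glin 0 0%N) (God 0 0%N) hL00 LG00.
have [sh1f sh1g] := shift_lemma _ _ _ (Glin 0 1%N) (God 0 1%N) hL00 LG01.
have G0e0 := oddE1 _ (God 0 0%N) 1.
have G0e1 := oddE2 _ (God 0 0%N) 1.
have G1e0 := oddE1 _ (God 0 1%N) 1.
have G1e1 := oddE2 _ (God 0 1%N) 1.
set g := (Gop 0 0%N (1, 0)).2 in sh0f G0e0 *.
set h := (Gop 0 0%N (0, 1)).1 in sh0g G0e1 *.
set u := (Gop 0 1%N (1, 0)).2 in sh1f G1e0 *.
set w := (Gop 0 1%N (0, 1)).1 in sh1g G1e1 *.
have two0 : (2 : {poly CC}) != 0 by rewrite -polyC_natr polyC_eq0 pnatr_eq0.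
have E1 : (g \Po ('X - s%:P)) * h = (q * lambda)%:P * ('X - (q * a)%:P).
  have := GG 0 0 0%N 0%N (1, 0); rewrite G0e0 sh0g !add0r add0n hL0 /kdelta /= mulr1z expr1z.
  rewrite pairD pairZ => /(congr1 fst) /= H.
  apply: (mulfI two0); rewrite mulr_natl mulr2n H comp_polyC -!mul_polyC.
  ring.
have E2 : (h \Po ('X - s%:P)) * g = (q * mu)%:P * ('X - (q * c)%:P).
  have := GG 0 0 0%N 0%N (0, 1); rewrite G0e1 sh0f !add0r add0n hL1 /kdelta /= mulr1z expr1z.
  rewrite pairD pairZ => /(congr1 snd) /= H.
  apply: (mulfI two0); rewrite mulr_natl mulr2n H comp_polyC -!mul_polyC.
  ring.
have L01f : forall f, Lop 0 1%N (f, 0) = ((δ * b)%:P * f, 0).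
  move=> f; rewrite hL0 /kdelta /= mulr0z !mul0r subr0 comp_polyXr expr0z.
  by rewrite scale0r add0r scale1r mulr1.
have L01g : forall f, Lop 0 1%N (0, f) = (0, (δ * d)%:P * f).
  move=> f; rewrite hL1 /kdelta /= mulr0z !mul0r subr0 comp_polyXr expr0z.
  by rewrite scale0r add0r scale1r mulr1.
have LGc : forall v, Lop 0 1%N (Gop 0 0%N v) - Gop 0 0%N (Lop 0 1%N v) = ((1 + q) / 2) *: Gop 0 1%N v.
  move=> v; rewrite LG addr0 addn0; congr (_ *: _); rewrite /s; ring.
have K0 : (0, (δ * d - δ * b)%:P * g) = ((1 + q) / 2) *: ((0, u) : V).
  rewrite -G1e0 -LGc G0e0 L01g L01f sh0f pairB; congr pair; rewrite ?subrr //.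
  by rewrite mulr1 comp_polyC polyCB mulrBl.
have K1 : ((δ * b - δ * d)%:P * h, 0) = ((1 + q) / 2) *: ((w, 0) : V).
  rewrite -G1e1 -LGc G0e1 L01g L01f sh0g pairB; congr pair; rewrite ?subrr //.
  by rewrite mulr1 comp_polyC polyCB mulrBl.
have XsC0 : forall z : CC, 'X - z%:P != 0 :> {poly CC}.
  by move=> z; rewrite -size_poly_eq0 size_XsubC.
have gn0 : g != 0.
  apply/eqP => g0; move: E1; rewrite g0 comp_poly0 mul0r => /esym/eqP.
  by rewrite mulf_eq0 polyC_eq0 mulf_eq0 (negbTE hq) (negbTE hlambda) (negbTE (XsC0 _)).
have hn0 : h != 0.
  apply/eqP => h0; move: E1; rewrite h0 mulr0 => /esym/eqP.
  by rewrite mulf_eq0 polyC_eq0 mulf_eq0 (negbTE hq) (negbTE hlambda) (negbTE (XsC0 _)).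
have hQ : (q != -1 /\ u = 0 /\ w = 0 /\ δ = 0) \/ (q = -1 /\ d = b /\ δ = 1).
  case: (eqVneq q (-1)) => hq1.
    right; have hd : δ = 1 by rewrite /δ /kdelta hq1 eqxx.
    split => //; split => //.
    move: K0; rewrite hq1 addrN mul0r scale0r hd !mul1r => /(congr1 snd) /= /eqP.
    by rewrite mulf_eq0 (negbTE gn0) orbF polyC_eq0 subr_eq0 => /eqP.
  left; have hd : δ = 0 by rewrite /δ /kdelta (negbTE hq1).
  have k0 : (1 + q) / 2 != 0.
    rewrite mulf_eq0 invr_eq0 pnatr_eq0 orbF addrC addr_eq0. exact: hq1.
  split => //; split; last split => //.
    move: K0; rewrite hd !mul0r subrr mul0r pairZ => /(congr1 snd) /= /esym/eqP.
    by rewrite scaler_eq0 (negbTE k0) => /eqP.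
  move: K1; rewrite hd !mul0r subrr mul0r pairZ => /(congr1 fst) /= /esym/eqP.
  by rewrite scaler_eq0 (negbTE k0) => /eqP.
have szX : size ('X - s%:P) = 2%N := size_XsubC s.
have szg : size (g \Po ('X - s%:P)) = size g := size_comp_poly2 g szX.
have gc0 : g \Po ('X - s%:P) != 0 by rewrite -size_poly_eq0 szg size_poly_eq0.
have hs : (size g + size h).-1 = 2%N.
  have := congr1 (fun p : {poly CC} => size p) E1; rewrite /= size_mul // szg size_Cmul ?mulf_neq0 // size_XsubC.
  by [].
have := size_poly_gt0 g; rewrite gn0 => sg.
have := size_poly_gt0 h; rewrite hn0 => sh.
set s' := (-1 + 2^-1) * q.
have LGp : forall v, Lop 0 0%N (Gop (-1) 0%N v) - Gop (-1) 0%N (Lop 0 0%N v) = s' *: Gop (-1) 0%N v.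
  move=> v; rewrite LG add0r add0n; congr (_ *: _); rewrite /s'; ring.
have [shpf shpg] := shift_lemma _ _ _ (Glin (-1) 0%N) (God (-1) 0%N) hL00 LGp.
have Gpe0 := oddE1 _ (God (-1) 0%N) 1.
have Gpe1 := oddE2 _ (God (-1) 0%N) 1.
set p' := (Gop (-1) 0%N (1, 0)).2 in shpf Gpe0 *.
set r' := (Gop (-1) 0%N (0, 1)).1 in shpg Gpe1 *.
have e2 : forall v, Lop (-1) 0%N (Gop 0 0%N v) - Gop 0 0%N (Lop (-1) 0%N v) = q *: Gop (-1) 0%N v.
  move=> v; rewrite LG addr0 add0n; congr (_ *: _); by rewrite /s; field.
have e1 : forall v, Lop 1 1%N (Gop (-1) 0%N v) - Gop (-1) 0%N (Lop 1 1%N v) = ((-1 + 2^-1) * (1 + q) - s) *: Gop 0 1%N v.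
  move=> v; rewrite LG addrN addn0; congr (_ *: _); rewrite /s; ring.
have L1m0 : forall f, Lop (-1) 0%N (f, 0) = (lambda^-1 *: ('X + (q * a)%:P) * (f \Po ('X + q%:P)), 0).
  by move=> f; rewrite hL0 /kdelta /= mulrN1z exprN1 mulr0 mul0r addr0 scale1r !mulN1r mulNr !polyCN !opprK.
have L1m1 : forall f, Lop (-1) 0%N (0, f) = (0, mu^-1 *: ('X + (q * c)%:P) * (f \Po ('X + q%:P))).
  by move=> f; rewrite hL1 /kdelta /= mulrN1z exprN1 mulr0 mul0r addr0 scale1r !mulN1r mulNr !polyCN !opprK.
have L110 : forall f, Lop 1 1%N (f, 0) = ((lambda * (δ * b))%:P * (f \Po ('X - q%:P)), 0).
  move=> f; rewrite hL0 /kdelta /= mulr1z expr1z mulr1 scale0r add0r mul1r.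
  by rewrite -mul_polyC -polyCM.
have L111 : forall f, Lop 1 1%N (0, f) = (0, (mu * (δ * d))%:P * (f \Po ('X - q%:P))).
  move=> f; rewrite hL1 /kdelta /= mulr1z expr1z mulr1 scale0r add0r mul1r.
  by rewrite -mul_polyC -polyCM.
have L10 : forall f, Lop 1 0%N (f, 0) = ((lambda *: ('X - (q * a)%:P)) * (f \Po ('X - q%:P)), 0).
  move=> f; rewrite hL0 /kdelta /= mulr1z expr1z !mul1r mulr0 mul0r addr0 scale1r.
  by [].
have hdd : δ * b = δ * d.
  by case: hQ => [[_ [_ [_ ->]]]|[_ [-> _]]]; rewrite ?mul0r.
have [g1|h1] : size g = 1%N \/ size h = 1%N by lia.
- have hg : g = (g`_0)%:P by apply: size1_polyC; rewrite g1.
  set e := g`_0 in hg.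
  have he : e != 0 by move: gn0; rewrite hg polyC_eq0.
  have hh : h = (q / e * lambda) *: ('X - (q*a)%:P).
    apply: (@mulfI _ e%:P); first by rewrite polyC_eq0.
    move: E1; rewrite hg comp_polyC => ->. rewrite -!mul_polyC mulrA -!polyCM.
    congr (_%:P * _). by field.
  move: E2; rewrite hh hg; csimp => E2.
  have [hlm hc] : q * lambda = q * mu /\ (q * lambda) * (s + q * a) = (q * mu) * (q * c).
    apply: lin_eq; rewrite -E2 -!mul_polyC.
    have hee : (q / e * lambda)%:P * e%:P = (q * lambda)%:P :> {poly CC}.
      by rewrite -polyCM; congr _%:P; field.
    by rewrite polyCD -hee; ring.
  have hlm' : lambda = mu := mulfI hq hlm.
  subst mu.
  have hc' : c = a + 2^-1.
    have H : s + q * a = q * c by apply: (mulfI (mulf_neq0 hq hlambda)).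
    by apply: (mulfI hq); rewrite -H /s; ring.
  split; first by []. split; first exact: hdd.
  exists e; split; first exact: he. left; split; first exact: hc'.
  split; first by rewrite /one0 /one1 G0e0 hg pairZ scaler0 -alg_polyC.
  have G0one1 : Gop 0 0%N one1 = ((q / e * lambda) *: ('X - (q * a)%:P), 0) by rewrite /one1 G0e1 hh.
  case: hQ => [[hq1 [u0 [w0 hd]]] | [hq1 [hdb hd]]].
    split; first by rewrite /one0 G1e0 u0.
    by rewrite /one1 G1e1 w0 hd mulr0 mul0r scale0r.
  have c1 : (-1 + 2^-1) * (1 + q) - s = 2^-1 by rewrite /s hq1; field.
  rewrite c1 in e1.
  have i20 : (2^-1 : CC) != 0 by rewrite invr_eq0 pnatr_eq0.
  split.
    have P0 := e2 (1,0).
    rewrite G0e0 L1m1 L1m0 sh0f Gpe0 pairB pairZ hq1 in P0.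
    move/(congr1 snd): P0 => /= P0.
    have hp' : p' = - ((lambda^-1 *: ('X + (-1 * c)%:P) * (g \Po ('X + (-1)%:P))) - (lambda^-1 *: ('X + (-1 * a)%:P) * (1 \Po ('X + (-1)%:P)) \Po ('X - s%:P)) * g).
      by rewrite P0 scaleN1r opprK.
    have U := e1 (1,0).
    rewrite Gpe0 L111 L110 shpf G1e0 pairB pairZ in U.
    move/(congr1 snd): U => /= U.
    have : 2^-1 *: u = 0.
      rewrite -U hp' hg hdb hd; csimp; rewrite -!mul_polyC. ring.
    move/eqP; rewrite scaler_eq0 (negbTE i20) /= => /eqP u0.
    by rewrite /one0 G1e0 u0.
  split; last exact: G0one1.
  have P1 := e2 (0,1).
  rewrite G0e1 L1m0 L1m1 sh0g Gpe1 pairB pairZ hq1 in P1.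
  move/(congr1 fst): P1 => /= P1.
  have hr : r' = - ((lambda^-1 *: ('X + (-1 * a)%:P) * (h \Po ('X + (-1)%:P))) - (lambda^-1 *: ('X + (-1 * c)%:P) * (1 \Po ('X + (-1)%:P)) \Po ('X - s%:P)) * h).
    by rewrite P1 scaleN1r opprK.
  have W := e1 (0,1).
  rewrite Gpe1 L111 L110 shpg G1e1 pairB pairZ in W.
  move/(congr1 fst): W => /= W.
  have : 2^-1 *: w = 2^-1 *: ((2 * q / e * lambda * δ * b) *: 1).
    rewrite -W hr hh hdb hd hc' /s hq1; csimp; rewrite -!mul_polyC.
    have hl : lambda%:P * (lambda^-1)%:P = 1 :> {poly CC} by rewrite -polyCM mulfV.
    have h2 : (2^-1)%:P * 2%:P = 1 :> {poly CC} by rewrite -polyCM mulVf // pnatr_eq0.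
    apply: (@etrans _ _ ((lambda * b * lambda^-1 * (-1 / e * lambda))%:P)); first by ring.
    by rewrite mulr1 -!polyCM; congr _%:P; field; rewrite he hlambda.
  move/(scalerI i20) => wE.
  by rewrite /one1 /one0 G1e1 wE pairZ scaler0.
- have hh : h = (h`_0)%:P by apply: size1_polyC; rewrite h1.
  set e := h`_0 in hh.
  have he : e != 0 by move: hn0; rewrite hh polyC_eq0.
  have hg0 : g = (q / e * mu) *: ('X - (q*c)%:P).
    apply: (@mulfI _ e%:P); first by rewrite polyC_eq0.
    move: E2; rewrite hh comp_polyC => ->. rewrite -!mul_polyC mulrA -!polyCM.
    congr (_%:P * _). by field.
  move: E1; rewrite hg0 hh; csimp => E1.
  have [hlm hc] : q * mu = q * lambda /\ (q * mu) * (s + q * c) = (q * lambda) * (q * a).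
    apply: lin_eq; rewrite -E1 -!mul_polyC.
    have hee : (q / e * mu)%:P * e%:P = (q * mu)%:P :> {poly CC}.
      by rewrite -polyCM; congr _%:P; field.
    by rewrite polyCD -hee; ring.
  have hlm' : lambda = mu by have := mulfI hq hlm; move=> ->.
  subst mu.
  have H : s + q * c = q * a by apply: (mulfI (mulf_neq0 hq hlambda)).
  have hc' : c = a - 2^-1.
    by apply: (mulfI hq); apply: (addrI s); rewrite H /s; ring.
  have hg : g = (q / e * lambda) *: ('X - (q*a - s)%:P).
    by rewrite hg0 -H [s + _]addrC addrK.
  split; first by []. split; first exact: hdd.
  exists e; split; first exact: he. right; split; first exact: hc'.
  split; first by rewrite /one0 /one1 G0e1 hh pairZ scaler0 -alg_polyC.
  have G0one0 : Gop 0 0%N one0 = (0, (q / e * lambda) *: ('X - (q * a - s)%:P)) by rewrite /one0 G0e0 hg.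
  case: hQ => [[hq1 [u0 [w0 hd]]] | [hq1 [hdb hd]]].
    split; first by rewrite /one1 G1e1 w0.
    by rewrite /one0 G1e0 u0 hd mulr0 mul0r scale0r.
  have c1 : (-1 + 2^-1) * (1 + q) - s = 2^-1 by rewrite /s hq1; field.
  rewrite c1 in e1.
  have i20 : (2^-1 : CC) != 0 by rewrite invr_eq0 pnatr_eq0.
  split.
    have P1 := e2 (0,1).
    rewrite G0e1 L1m0 L1m1 sh0g Gpe1 pairB pairZ hq1 in P1.
    move/(congr1 fst): P1 => /= P1.
    have hr : r' = - ((lambda^-1 *: ('X + (-1 * a)%:P) * (h \Po ('X + (-1)%:P))) - (lambda^-1 *: ('X + (-1 * c)%:P) * (1 \Po ('X + (-1)%:P)) \Po ('X - s%:P)) * h).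
      by rewrite P1 scaleN1r opprK.
    have W := e1 (0,1).
    rewrite Gpe1 L111 L110 shpg G1e1 pairB pairZ in W.
    move/(congr1 fst): W => /= W.
    have : 2^-1 *: w = 0.
      rewrite -W hr hh hdb hd; csimp; rewrite -!mul_polyC. ring.
    move/eqP; rewrite scaler_eq0 (negbTE i20) /= => /eqP w0.
    by rewrite /one1 G1e1 w0.
  split; last exact: G0one0.
  have P0 := e2 (1,0).
  rewrite G0e0 L1m1 L1m0 sh0f Gpe0 pairB pairZ hq1 in P0.
  move/(congr1 snd): P0 => /= P0.
  have hp' : p' = - ((lambda^-1 *: ('X + (-1 * c)%:P) * (g \Po ('X + (-1)%:P))) - (lambda^-1 *: ('X + (-1 * a)%:P) * (1 \Po ('X + (-1)%:P)) \Po ('X - s%:P)) * g).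
    by rewrite P0 scaleN1r opprK.
  have U := e1 (1,0).
  rewrite Gpe0 L111 L110 shpf G1e0 pairB pairZ in U.
  move/(congr1 snd): U => /= U.
  have : 2^-1 *: u = 2^-1 *: ((2 * q / e * lambda * δ * b) *: 1).
    rewrite -U hp' hg hdb hd hc' /s hq1; csimp; rewrite -!mul_polyC.
    apply: (@etrans _ _ ((lambda * b * lambda^-1 * (-1 / e * lambda))%:P)); first by ring.
    by rewrite mulr1 -!polyCM; congr _%:P; field; rewrite he hlambda.
  move/(scalerI i20) => uE.
  by rewrite /one1 /one0 G1e0 uE pairZ scaler0.
Qed.
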